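(* Let $G$ be a finitely generated group and $S$ a finite generating set. Then the Cayley graph $Cay(G,S)$ (equivalently $G$) is quasi-isometric to a tree if and only if there exist $i_0,k,m\in\mathbb{N}$ such that $G$ is $(i_0,k,m)$-chordal with respect to $S$.
   Context: $S^{\pm1}=S\cup S^{-1}\setminus\{e\}$; $Cay(G,S)$ has vertex set $G$, edges $\{g,gs\}$ ($s\in S^{\pm1}$), each edge of length 1. A relation $s_1\cdots s_n=e$ with $n>2$, $s_i\in S^{\pm1}$, is simple if $s_p\cdots s_q=e$ holds exactly when $(p,q)=(1,n)$. $G$ is $(i_0,k,m)$-chordal with respect to $S$ if for every simple relation $s_1\cdots s_n=e$ with $n\ge k$ there exist $1\le i\le i_0$, $i<j\le n$ and $s'_1,\dots,s'_r\in S^{\pm1}$ with $s_i\cdots s_j=s'_1\cdots s'_r$ and $r\le\min\{m,\,j-i,\,n-j+i-2\}$. *)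

(* Defs.v *)
From Stdlib Require Import List Arith Lia.
Import ListNotations.
Set Implicit Arguments.

Definition is_group (G : Type) (mul : G -> G -> G) (inv : G -> G) (e : G) : Prop :=
  (forall x y z, mul x (mul y z) = mul (mul x y) z) /\
  (forall x, mul e x = x) /\ (forall x, mul x e = x) /\
  (forall x, mul (inv x) x = e) /\ (forall x, mul x (inv x) = e).

Definition wprod (G : Type) (mul : G -> G -> G) (e : G) (w : list G) : G :=
  fold_right mul e w.

Definition Spm (G : Type) (inv : G -> G) (e : G) (S : list G) (x : G) : Prop :=
  (In x S \/ In (inv x) S) /\ x <> e.

Definition generates (G : Type) (mul : G -> G -> G) (inv : G -> G) (e : G)
  (S : list G) : Prop :=
  forall g, exists w, Forall (Spm inv e S) w /\ wprod mul e w = g.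

(** the subword s_p ... s_q (1-indexed, p <= q) *)
Definition seg (G : Type) (w : list G) (p q : nat) : list G :=
  firstn (S q - p) (skipn (p - 1) w).

Definition simple_relation (G : Type) (mul : G -> G -> G) (inv : G -> G) (e : G)
  (S : list G) (w : list G) : Prop :=
  2 < length w /\ Forall (Spm inv e S) w /\ wprod mul e w = e /\
  (forall p q, 1 <= p -> p <= q -> q <= length w ->
     (wprod mul e (seg w p q) = e <-> (p = 1 /\ q = length w))).

(** (i0,k,m)-chordality. The bound r <= n - j + i - 2 is written
    r + 2 + j <= n + i to avoid truncated subtraction. *)
Definition chordal (G : Type) (mul : G -> G -> G) (inv : G -> G) (e : G)
  (S : list G) (i0 k m : nat) : Prop :=
  forall w, simple_relation mul inv e S w -> k <= length w ->
    exists i j w', 1 <= i /\ i <= i0 /\ i < j /\ j <= length w /\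
      Forall (Spm inv e S) w' /\
      wprod mul e (seg w i j) = wprod mul e w' /\
      length w' <= m /\ length w' <= j - i /\
      length w' + 2 + j <= length w + i.

Inductive walk (V : Type) (adj : V -> V -> Prop) : nat -> V -> V -> Prop :=
| walk0 x : walk adj 0 x x
| walkS n x y z : adj x y -> walk adj n y z -> walk adj (S n) x z.

Definition gdist (V : Type) (adj : V -> V -> Prop) (x y : V) (n : nat) : Prop :=
  walk adj n x y /\ forall m, walk adj m x y -> n <= m.

Definition connected (V : Type) (adj : V -> V -> Prop) : Prop :=
  forall x y, exists n, walk adj n x y.

Fixpoint chain (V : Type) (adj : V -> V -> Prop) (x : V) (l : list V) : Prop :=
  match l with
  | [] => True
  | y :: l' => adj x y /\ chain adj y l'
  end.

Definition is_tree (V : Type) (adj : V -> V -> Prop) : Prop :=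
  (forall x y, adj x y -> adj y x) /\ (forall x, ~ adj x x) /\
  connected adj /\
  (forall (x : V) (l : list V), 2 <= length l -> NoDup (x :: l) ->
     chain adj x l -> ~ adj (last l x) x).

Definition quasi_isometric (V W : Type) (adjV : V -> V -> Prop)
  (adjW : W -> W -> Prop) : Prop :=
  exists (f : V -> W) (L C : nat),
    (forall x y dx dy, gdist adjV x y dx -> gdist adjW (f x) (f y) dy ->
        dy <= L * dx + C /\ dx <= L * dy + C) /\
    (forall w, exists x d, gdist adjW (f x) w d /\ d <= C).

Definition cay_adj (G : Type) (mul : G -> G -> G) (inv : G -> G) (e : G)
  (S : list G) (g h : G) : Prop :=
  exists s, Spm inv e S s /\ h = mul g s.

Definition qi_to_tree (V : Type) (adj : V -> V -> Prop) : Prop :=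
  exists (T : Type) (adjT : T -> T -> Prop), is_tree adjT /\ quasi_isometric adj adjT.

(* Main.v *)
Require Import Defs.
From Stdlib Require Import List Arith Lia Classical ClassicalEpsilon.
From Stdlib Require Import FunctionalExtensionality PropExtensionality ProofIrrelevance.
Import ListNotations.


Lemma min_ex (P : nat -> Prop) : (exists n, P n) -> exists n, P n /\ forall m, P m -> n <= m.
Proof.
  intros [n Hn]. revert Hn. induction n as [n IH] using lt_wf_ind. intro Hn.
  destruct (classic (exists m, m < n /\ P m)) as [[m [Hm Pm]]|H].
  - exact (IH m Hm Pm).
  - exists n. split; auto. intros m Pm. destruct (le_lt_dec n m); auto. exfalso; apply H; eauto.
Qed.

Lemma max_ex (g : nat -> nat) N : exists p, p <= N /\ forall q, q <= N -> g q <= g p.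
Proof.
  induction N.
  - exists 0. split; auto. intros q Hq. replace q with 0 by lia. auto.
  - destruct IHN as [p [Hp Hm]]. destruct (le_lt_dec (g (S N)) (g p)).
    + exists p. split; [lia|]. intros q Hq. destruct (Nat.eq_dec q (S N)); subst; auto. apply Hm; lia.
    + exists (S N). split; auto. intros q Hq. destruct (Nat.eq_dec q (S N)); subst; auto.
      specialize (Hm q ltac:(lia)). lia.
Qed.

Lemma maxP_ex (P : nat -> Prop) D : P 0 -> exists u, u <= D /\ P u /\ forall v, u < v <= D -> ~ P v.
Proof.
  intro H0. induction D.
  - exists 0. split; auto. split; auto. intros; lia.
  - destruct (classic (P (S D))).
    + exists (S D). split; auto. split; auto. intros; lia.
    + destruct IHD as [u [Hu [Pu Hn]]]. exists u. split; [lia|]. split; auto.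
      intros v Hv. destruct (Nat.eq_dec v (S D)); subst; auto. apply Hn; lia.
Qed.

Section Graph.
Context {V : Type}.
Variable adj : V -> V -> Prop.

Definition fpath (c : nat -> V) (n : nat) : Prop := forall t, t < n -> adj (c t) (c (S t)).

Lemma walk_fpath n x y : walk adj n x y -> exists c, c 0 = x /\ c n = y /\ fpath c n.
Proof.
  induction 1 as [x|n x y z Hxy Hw IH].
  - exists (fun _ => x). repeat split; intros t Ht; lia.
  - destruct IH as [c [H0 [Hn Hp]]].
    exists (fun t => match t with 0 => x | S t' => c t' end). simpl. repeat split; auto.
    intros [|t] Ht; simpl. rewrite H0; auto. apply Hp; lia.
Qed.

Lemma fpath_walk n c : fpath c n -> walk adj n (c 0) (c n).
Proof.
  revert c; induction n; intros c Hp. constructor.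
  apply walkS with (c 1). apply Hp; lia.
  apply (IHn (fun t => c (S t))). intros t Ht. apply Hp. lia.
Qed.

Lemma fpath_shift c n a : fpath c n -> fpath (fun t => c (a + t)) (n - a).
Proof. intros H t Ht. replace (a + S t) with (S (a + t)) by lia. apply H. lia. Qed.

Lemma fpath_le c n m : fpath c n -> m <= n -> fpath c m.
Proof. intros H Hm t Ht. apply H; lia. Qed.

Definition fcat (c : nat -> V) (n : nat) (d : nat -> V) (t : nat) : V :=
  if t <=? n then c t else d (t - n).

Lemma fcat_path c n d m : fpath c n -> fpath d m -> c n = d 0 -> fpath (fcat c n d) (n + m).
Proof.
  intros Hc Hd E t Ht. unfold fcat.
  destruct (Nat.leb_spec t n); destruct (Nat.leb_spec (S t) n).
  - apply Hc; lia.
  - replace t with n by lia. replace (S n - n) with 1 by lia. rewrite E. apply Hd. lia.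
  - lia.
  - replace (S t - n) with (S (t - n)) by lia. apply Hd. lia.
Qed.

Hypothesis Hsym : forall x y, adj x y -> adj y x.

Lemma fpath_rev c n : fpath c n -> fpath (fun t => c (n - t)) n.
Proof.
  intros H t Ht. apply Hsym. replace (n - t) with (S (n - S t)) by lia. apply H. lia.
Qed.

Lemma walk_rev n x y : walk adj n x y -> walk adj n y x.
Proof.
  intro H. apply walk_fpath in H as [c [H0 [Hn Hp]]]. subst.
  pose proof (fpath_walk _ _ (fpath_rev c n Hp)). simpl in H.
  rewrite Nat.sub_0_r, Nat.sub_diag in H. exact H.
Qed.

Lemma walk_app n m x y z : walk adj n x y -> walk adj m y z -> walk adj (n + m) x z.
Proof.
  induction 1; intros; simpl; auto. eapply walkS; eauto.
Qed.

Definition wIn (P : V -> Prop) x y : Prop :=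
  exists c n, fpath c n /\ c 0 = x /\ c n = y /\ forall t, t <= n -> P (c t).

Lemma wIn_refl (P : V -> Prop) x : P x -> wIn P x x.
Proof. intro. exists (fun _ => x), 0. repeat split; auto. intros t Ht; lia. Qed.

Lemma wIn_mono (P Q : V -> Prop) x y : (forall v, P v -> Q v) -> wIn P x y -> wIn Q x y.
Proof. intros H [c [n [Hp [H0 [Hn Ha]]]]]. exists c, n. repeat split; auto. Qed.

Lemma wIn_sym P x y : wIn P x y -> wIn P y x.
Proof.
  intros [c [n [Hp [H0 [Hn Ha]]]]]. exists (fun t => c (n - t)), n.
  repeat split. apply fpath_rev; auto. rewrite Nat.sub_0_r; auto. rewrite Nat.sub_diag; auto.
  intros t Ht. apply Ha. lia.
Qed.

Lemma wIn_trans P x y z : wIn P x y -> wIn P y z -> wIn P x z.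
Proof.
  intros [c [n [Hp [H0 [Hn Ha]]]]] [d [m [Hq [G0 [Gm Ga]]]]].
  exists (fcat c n d), (n + m). repeat split.
  - apply fcat_path; auto; congruence.
  - unfold fcat. simpl. auto.
  - unfold fcat. destruct (Nat.leb_spec (n+m) n). replace m with 0 in * by lia.
    rewrite Nat.add_0_r, Hn, <- G0; auto. replace (n + m - n) with m by lia; auto.
  - intros t Ht. unfold fcat. destruct (Nat.leb_spec t n). apply Ha; auto. apply Ga; lia.
Qed.

Lemma wIn_path P c n a b : fpath c n -> (forall t, t <= n -> P (c t)) -> a <= n -> b <= n ->
  wIn P (c a) (c b).
Proof.
  intros Hp Ha Han Hbn.
  assert (K : forall a b, a <= b -> b <= n -> wIn P (c a) (c b)).
  { intros a' b' Hab Hb. exists (fun t => c (a' + t)), (b' - a'). repeat split.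
    - intros t Ht. replace (a' + S t) with (S (a' + t)) by lia. apply Hp; lia.
    - rewrite Nat.add_0_r; auto.
    - f_equal; lia.
    - intros t Ht; apply Ha; lia. }
  destruct (le_lt_dec a b). apply K; auto. apply wIn_sym, K; lia.
Qed.

Lemma wIn_walk P x y : wIn P x y -> exists n, walk adj n x y.
Proof. intros [c [n [Hp [H0 [Hn Ha]]]]]. exists n. subst. apply fpath_walk; auto. Qed.

Lemma short_inj P x y : wIn P x y ->
  exists d m, fpath d m /\ d 0 = x /\ d m = y /\ (forall t, t <= m -> P (d t)) /\
    (forall a b, a <= m -> b <= m -> d a = d b -> a = b).
Proof.
  intro H.
  destruct (min_ex (fun m => exists d, fpath d m /\ d 0 = x /\ d m = y /\ forall t, t <= m -> P (d t)))
    as [m [[d [Hp [H0 [Hm Ha]]]] Hmin]].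
  { destruct H as [c [n Hc]]. exists n, c. exact Hc. }
  exists d, m. repeat split; auto.
  assert (K : forall a b, a < b -> b <= m -> d a = d b -> False).
  { intros a b Hab Hb E.
    assert (m <= m - (b - a)); [|lia].
    apply Hmin. exists (fun t => if t <=? a then d t else d (t + (b - a))). repeat split.
    - intros t Ht. destruct (Nat.leb_spec t a); destruct (Nat.leb_spec (S t) a).
      + apply Hp; lia.
      + replace t with a by lia. rewrite E. replace (S a + (b - a)) with (S b) by lia. apply Hp; lia.
      + lia.
      + replace (S t + (b - a)) with (S (t + (b - a))) by lia. apply Hp; lia.
    - simpl. auto.
    - destruct (Nat.leb_spec (m - (b - a)) a).
      + replace (m - (b - a)) with a by lia. rewrite E, <- Hm. f_equal. lia.
      + rewrite <- Hm. f_equal. lia.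
    - intros t Ht. destruct (Nat.leb_spec t a). apply Ha; lia. apply Ha; lia. }
  intros a b Ha' Hb' E. destruct (lt_eq_lt_dec a b) as [[Hl|Hl]|Hl]; auto.
  exfalso; eapply K; eauto. exfalso; eapply K; eauto.
Qed.

Definition dist (x y : V) : nat := epsilon (inhabits 0) (fun n => gdist adj x y n).

Hypothesis Hconn : connected adj.

Lemma dist_spec x y : gdist adj x y (dist x y).
Proof.
  unfold dist. apply epsilon_spec. destruct (Hconn x y) as [n Hn].
  destruct (min_ex (fun n => walk adj n x y)) as [m [Hm Hmin]]; eauto.
  exists m; split; auto.
Qed.

Lemma dist_le n x y : walk adj n x y -> dist x y <= n.
Proof. intro H. apply (proj2 (dist_spec x y)). auto. Qed.

Lemma dist_walk x y : walk adj (dist x y) x y.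
Proof. apply dist_spec. Qed.

Lemma gdist_dist x y d : gdist adj x y d -> d = dist x y.
Proof.
  intros [H1 H2]. pose proof (dist_spec x y) as [H3 H4].
  specialize (H2 _ H3). specialize (H4 _ H1). lia.
Qed.

Lemma dist_refl x : dist x x = 0.
Proof. pose proof (dist_le 0 x x (walk0 adj x)). lia. Qed.

Lemma dist_sym x y : dist x y = dist y x.
Proof.
  pose proof (dist_le _ _ _ (walk_rev _ _ _ (dist_walk x y))).
  pose proof (dist_le _ _ _ (walk_rev _ _ _ (dist_walk y x))). lia.
Qed.

Lemma dist_tri x y z : dist x z <= dist x y + dist y z.
Proof. apply dist_le. apply walk_app with y; apply dist_walk. Qed.

Lemma dist_adj x y : adj x y -> dist x y <= 1.
Proof. intro H. apply dist_le. apply (walkS x H). constructor. Qed.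

Lemma dist_0 x y : dist x y = 0 -> x = y.
Proof. intro H. pose proof (dist_walk x y). rewrite H in H0. inversion H0; auto. Qed.

Lemma dist_path c n a b : fpath c n -> a <= b -> b <= n -> dist (c a) (c b) <= b - a.
Proof.
  intros Hp Hab Hb. apply dist_le.
  pose proof (fpath_walk (b - a) (fun t => c (a + t))) as W. simpl in W.
  rewrite Nat.add_0_r in W. replace (a + (b - a)) with b in W by lia. apply W.
  intros t Ht. replace (a + S t) with (S (a + t)) by lia. apply Hp; lia.
Qed.

Lemma geo_ex x y : exists c, fpath c (dist x y) /\ c 0 = x /\ c (dist x y) = y.
Proof.
  destruct (walk_fpath _ _ _ (dist_walk x y)) as [c [H0 [Hn Hp]]]. eauto.
Qed.

Lemma geo_dist c N a b : fpath c N -> dist (c 0) (c N) = N -> a <= b -> b <= N ->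
  dist (c a) (c b) = b - a.
Proof.
  intros Hp HN Hab Hb.
  pose proof (dist_path c N a b Hp Hab Hb).
  pose proof (dist_path c N 0 a Hp ltac:(lia) ltac:(lia)).
  pose proof (dist_path c N b N Hp ltac:(lia) ltac:(lia)).
  pose proof (dist_tri (c 0) (c a) (c N)). pose proof (dist_tri (c a) (c b) (c N)). lia.
Qed.

Lemma geo_inj c N a b : fpath c N -> dist (c 0) (c N) = N -> a <= N -> b <= N -> c a = c b -> a = b.
Proof.
  intros Hp HN Ha Hb E. destruct (le_lt_dec a b).
  - pose proof (geo_dist c N a b Hp HN l Hb). rewrite E, dist_refl in H. lia.
  - pose proof (geo_dist c N b a Hp HN ltac:(lia) Ha). rewrite E, dist_refl in H. lia.
Qed.

Lemma dist_pred o x n : dist o x = S n -> exists y, adj y x /\ dist o y = n.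
Proof.
  intro H. destruct (geo_ex o x) as [c [Hp [H0 Hn]]]. rewrite H in *.
  exists (c n). split. rewrite <- Hn. apply Hp; lia.
  pose proof (geo_dist c (S n) 0 n Hp ltac:(rewrite H0, Hn; auto) ltac:(lia) ltac:(lia)).
  rewrite H0 in H1. lia.
Qed.

End Graph.
Arguments dist : simpl never.


Lemma last_cons {A} (a : A) l d : last (a :: l) d = last l a.
Proof. destruct l; simpl; auto. revert a0. induction l; simpl; auto. Qed.

Section Tree.
Context {V : Type}.
Variable adj : V -> V -> Prop.

Lemma chain_map (c : nat -> V) k N : (forall t, k <= t < k + N -> adj (c t) (c (S t))) ->
  chain adj (c k) (map c (seq (S k) N)).
Proof.
  revert k; induction N; intros k H; simpl; auto. split. apply H; lia.
  apply IHN. intros t Ht; apply H; lia.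
Qed.

Lemma last_map (c : nat -> V) k N : last (map c (seq (S k) N)) (c k) = c (k + N).
Proof.
  revert k; induction N; intros k. simpl. f_equal; lia.
  simpl map. rewrite last_cons. rewrite IHN. f_equal; lia.
Qed.

Lemma tree_nocycle : is_tree adj -> forall c N, 2 <= N -> fpath adj c N -> adj (c N) (c 0) ->
  (forall a b, a <= N -> b <= N -> c a = c b -> a = b) -> False.
Proof.
  intros [_ [_ [_ HT]]] c N HN Hp Hc Hi.
  apply (HT (c 0) (map c (seq 1 N))).
  - rewrite length_map, length_seq; auto.
  - change (NoDup (map c (seq 0 (S N)))). apply NoDup_nth with (d := c 0).
    intros i j Hi' Hj' E. rewrite length_map, length_seq in *.
    rewrite (map_nth c (seq 0 (S N)) 0) in E. rewrite (map_nth c (seq 0 (S N)) 0) in E.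
    rewrite !seq_nth in E by lia. simpl in E. apply Hi; [lia|lia|exact E].
  - apply chain_map. intros t Ht; apply Hp; lia.
  - rewrite last_map. simpl. auto.
Qed.

Lemma chain_nth x l d : chain adj x l -> forall t, t < length l -> adj (nth t (x::l) d) (nth (S t) (x::l) d).
Proof.
  revert x; induction l as [|y l IH]; intros x H t Ht; simpl in *. lia.
  destruct H as [H1 H2]. destruct t. auto.
  change (adj (nth t (y::l) d) (nth (S t) (y::l) d)). apply IH; auto. lia.
Qed.

Lemma last_nth (x : V) (l : list V) : last l x = nth (length l) (x::l) x.
Proof.
  revert x; induction l as [|y l IH]; intros x. reflexivity.
  rewrite last_cons, IH. change (nth (length l) (y :: l) y = nth (length l) (y :: l) x). apply nth_indep. simpl; lia.
Qed.

Hypothesis Hsym : forall x y, adj x y -> adj y x.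

Lemma level_nocycle (h : V -> nat) :
  (forall a b, adj a b -> h b = S (h a) \/ h a = S (h b)) ->
  (forall a b1 b2, adj a b1 -> adj a b2 -> h b1 < h a -> h b2 < h a -> b1 = b2) ->
  forall x l, 2 <= length l -> NoDup (x :: l) -> chain adj x l -> ~ adj (last l x) x.
Proof.
  intros Hl Hu x l Hlen Hnd Hch Hcl.
  set (N := length l) in *. set (c := fun t => nth t (x::l) x).
  assert (Hp : forall t, t < N -> adj (c t) (c (S t))) by (apply chain_nth; auto).
  assert (Hc : adj (c N) (c 0)). { unfold c, N. rewrite <- last_nth. exact Hcl. }
  assert (Hi : forall a b, a <= N -> b <= N -> c a = c b -> a = b).
  { intros a b Ha Hb E. apply (proj1 (NoDup_nth (x::l) x) Hnd); simpl; auto; lia. }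
  destruct (max_ex (fun t => h (c t)) N) as [p [Hp1 Hm]].
  assert (Lo : forall q, q <= N -> adj (c p) (c q) -> h (c q) < h (c p)).
  { intros q Hq A. specialize (Hm q Hq). destruct (Hl _ _ A); lia. }
  destruct (Nat.eq_dec p 0) as [->|Hp0].
  - assert (A : adj (c 0) (c 1)) by (apply Hp; lia).
    assert (B : adj (c 0) (c N)) by (apply Hsym; auto).
    assert (c 1 = c N). { apply (Hu (c 0)); auto; apply Lo; auto; lia. }
    apply Hi in H; lia.
  - destruct (Nat.eq_dec p N) as [->|HpN].
    + assert (c (N - 1) = c 0).
      { assert (A : adj (c (N-1)) (c N)). { replace N with (S (N - 1)) at 2 by lia. apply Hp; lia. }
        apply (Hu (c N)); [apply Hsym; auto|auto| |]; apply Lo; auto; lia. }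
      apply Hi in H; lia.
    + assert (c (p - 1) = c (S p)).
      { assert (A : adj (c (p-1)) (c p)). { replace p with (S (p - 1)) at 2 by lia. apply Hp; lia. }
        assert (B : adj (c p) (c (S p))) by (apply Hp; lia).
        apply (Hu (c p)); [apply Hsym; auto|auto| |]; apply Lo; auto; lia. }
      apply Hi in H; lia.
Qed.

End Tree.


Lemma wIn_seg {V} (adj : V -> V -> Prop) (P : V -> Prop) c n a b : fpath adj c n -> a <= b -> b <= n ->
  (forall t, a <= t <= b -> P (c t)) -> wIn adj P (c a) (c b).
Proof.
  intros Hp Hab Hb HP. exists (fun t => c (a + t)), (b - a). repeat split.
  - intros t Ht. replace (a + S t) with (S (a + t)) by lia. apply Hp; lia.
  - rewrite Nat.add_0_r; auto.
  - f_equal; lia.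
  - intros t Ht; apply HP; lia.
Qed.

Section TreeFacts.
Context {T : Type}.
Variable adjT : T -> T -> Prop.
Hypothesis Htree : is_tree adjT.

Let Hsym : forall x y, adjT x y -> adjT y x := proj1 Htree.
Let Hconn : connected adjT := proj1 (proj2 (proj2 Htree)).

Lemma tree_pass tau D : fpath adjT tau D -> dist adjT (tau 0) (tau D) = D ->
  forall om W, fpath adjT om W -> om 0 = tau 0 -> om W = tau D ->
  forall u, u <= D -> exists t, t <= W /\ om t = tau u.
Proof.
  intros Ht HD om W Hw H0 HW u Hu.
  destruct (Nat.eq_dec u 0) as [->|Hu0]. exists 0; split; auto; lia.
  destruct (Nat.eq_dec u D) as [->|HuD]. exists W; split; auto.
  apply NNPP; intro Hn.
  assert (Hav : forall t, t <= W -> om t <> tau u). { intros t Ht' E; apply Hn; eauto. }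
  set (P := fun v => v <> tau u).
  assert (Gi : forall v, v <= D -> v <> u -> P (tau v)).
  { intros v Hv Hvu E. apply Hvu. apply (geo_inj adjT Hconn tau D v u Ht HD Hv Hu E). }
  assert (W1 : wIn adjT P (tau (S u)) (tau D)).
  { apply wIn_seg with D; auto; try lia. intros t Ht'. apply Gi; lia. }
  assert (W2 : wIn adjT P (tau D) (tau 0)).
  { rewrite <- H0, <- HW. apply wIn_path with W; auto; try lia; intros t Ht'; apply Hav; auto. }
  assert (W3 : wIn adjT P (tau 0) (tau (u - 1))).
  { apply wIn_seg with D; auto; try lia. intros t Ht'. apply Gi; lia. }
  assert (WW : wIn adjT P (tau (S u)) (tau (u - 1))).
  { eapply wIn_trans; [|eapply wIn_trans]; eauto. }
  destruct (short_inj adjT P _ _ WW) as [pi [Lp [Hp [Hp0 [HpL [HpP Hpi]]]]]].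
  assert (HL2 : 2 <= Lp).
  { assert (E : dist adjT (tau (u - 1)) (tau (S u)) = 2).
    { rewrite (geo_dist adjT Hconn tau D (u-1) (S u)); auto; lia. }
    rewrite (dist_sym adjT Hsym Hconn) in E.
    pose proof (dist_le adjT Hconn _ _ _ (fpath_walk adjT Lp pi Hp)). rewrite Hp0, HpL in H. lia. }
  apply (tree_nocycle adjT Htree (fun t => match t with 0 => tau u | S t' => pi t' end) (S Lp)).
  - lia.
  - intros [|t] Ht'. rewrite Hp0. apply Ht; lia. apply Hp; lia.
  - rewrite HpL. replace u with (S (u - 1)) at 2 by lia. apply Ht; lia.
  - intros [|a] [|b] Ha Hb E; auto.
    + exfalso. apply (HpP b ltac:(lia)). auto.
    + exfalso. apply (HpP a ltac:(lia)). auto.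
    + f_equal. apply Hpi; auto; lia.
Qed.

Lemma jumps (q : nat -> T) N J : (forall t, t < N -> dist adjT (q t) (q (S t)) <= J) ->
  wIn adjT (fun v => exists t, t <= N /\ dist adjT (q t) v <= J) (q 0) (q N).
Proof.
  induction N; intro H.
  - apply wIn_refl. exists 0. rewrite (dist_refl adjT Hconn). lia.
  - apply wIn_trans with (q N).
    + eapply wIn_mono; [|apply IHN; intros; apply H; lia].
      intros v [t [Ht Hd]]. exists t; split; auto.
    + destruct (geo_ex adjT Hconn (q N) (q (S N))) as [g [Hg [G0 G1]]].
      set (d := dist adjT (q N) (q (S N))) in *.
      assert (Hd : dist adjT (g 0) (g d) = d) by (rewrite G0, G1; reflexivity).
      rewrite <- G0, <- G1. apply wIn_path with d; auto; try lia.
      intros t Ht. exists N. split; auto. rewrite <- G0.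
      rewrite (geo_dist adjT Hconn g d 0 t Hg Hd ltac:(lia) Ht).
      specialize (H N ltac:(lia)). fold d in H. lia.
Qed.

Lemma pass_jump (q : nat -> T) N J : (forall t, t < N -> dist adjT (q t) (q (S t)) <= J) ->
  forall tau D, fpath adjT tau D -> dist adjT (tau 0) (tau D) = D -> tau 0 = q 0 -> tau D = q N ->
  forall u, u <= D -> exists t, t <= N /\ dist adjT (q t) (tau u) <= J.
Proof.
  intros Hj tau D Ht HD T0 TD u Hu.
  destruct (jumps q N J Hj) as [om [W [Hw [H0 [HW HP]]]]].
  destruct (tree_pass tau D Ht HD om W Hw ltac:(congruence) ltac:(congruence) u Hu) as [t [Htw E]].
  rewrite <- E. apply HP; auto.
Qed.

End TreeFacts.


Section QIChord.
Context {V : Type}.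
Variable adj : V -> V -> Prop.
Hypothesis Hsym : forall x y, adj x y -> adj y x.
Hypothesis Hconn : connected adj.
Context {T : Type}.
Variable adjT : T -> T -> Prop.
Hypothesis Htree : is_tree adjT.
Variable f : V -> T.
Variables L C : nat.
Hypothesis HL : 1 <= L.
Hypothesis HQ1 : forall x y, dist adjT (f x) (f y) <= L * dist adj x y + C.
Hypothesis HQ2 : forall x y, dist adj x y <= L * dist adjT (f x) (f y) + C.

Let HsymT : forall x y, adjT x y -> adjT y x := proj1 Htree.
Let HconnT : connected adjT := proj1 (proj2 (proj2 Htree)).

Lemma mul_le_cancel a b : L * a <= L * b -> a <= b.
Proof. intro H. destruct (le_lt_dec a b); auto. exfalso.
  assert (L * b < L * a) by (apply Nat.mul_lt_mono_pos_l; lia). lia. Qed.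

Lemma qi_chord : exists M m0, 3 <= M /\ forall c n, fpath adj c n -> c n = c 0 -> 2 * M <= n ->
  dist adj (c 0) (c (M - 1)) < M - 1 \/
  exists a b, a < M /\ a + 1 < b /\ b <= n /\ dist adj (c a) (c b) <= m0 /\
     dist adj (c a) (c b) <= b - a - 1 /\ dist adj (c a) (c b) + 1 + b <= n + a.
Proof.
  set (J := L + C). set (m0 := L * (2 * J) + C). set (B := m0 + 2).
  set (Q := L * B + J + C). set (M := L * (2 * Q + 1) + C + 3).
  exists M, m0. split. unfold M; lia.
  intros c n Hp Hn HnM.
  assert (Hd1 : dist adj (c 0) (c (M - 1)) <= M - 1 - 0) by (apply (dist_path adj Hconn c n); auto; lia).
  destruct (lt_dec (dist adj (c 0) (c (M - 1))) (M - 1)) as [Hlt|Hge]; [left; auto|right].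
  set (a := f (c 0)). set (b := f (c (M - 1))).
  destruct (geo_ex adjT HconnT a b) as [tau [Ht [T0 TD]]].
  set (D := dist adjT a b) in *.
  assert (HtD : dist adjT (tau 0) (tau D) = D) by (rewrite T0, TD; reflexivity).
  assert (HD : M - 1 <= L * D + C) by (pose proof (HQ2 (c 0) (c (M - 1))); unfold D, a, b; lia).
  assert (HD2 : 2 * Q + 1 <= D).
  { apply mul_le_cancel. unfold M in HD. lia. }
  assert (Hu : exists u, u <= D - u /\ D <= 2 * u + 1).
  { destruct (Nat.Even_or_Odd D) as [[u Hu]|[u Hu]]; exists u; lia. }
  destruct Hu as [u [Hu1 Hu2]].
  assert (HuQ : Q <= u) by lia.
  assert (Jb : forall t, t < n -> dist adjT (f (c t)) (f (c (S t))) <= J).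
  { intros t Htn. pose proof (HQ1 (c t) (c (S t))).
    pose proof (dist_adj adj Hconn _ _ (Hp t Htn)).
    assert (L * dist adj (c t) (c (S t)) <= L * 1) by (apply Nat.mul_le_mono_l; auto). unfold J; lia. }
  destruct (pass_jump adjT Htree (fun t => f (c t)) (M - 1) J ltac:(intros; apply Jb; lia)
     tau D Ht HtD T0 TD u ltac:(lia)) as [al [Hal Hald]].
  destruct (pass_jump adjT Htree (fun t => f (c (M - 1 + t))) (n - (M - 1)) J
     ltac:(intros t Htn; cbv beta; replace (M - 1 + S t) with (S (M - 1 + t)) by lia; apply Jb; lia)
     (fun t => tau (D - t)) D (fpath_rev adjT HsymT tau D Ht)
     ltac:(cbv beta; rewrite Nat.sub_0_r, Nat.sub_diag, (dist_sym adjT HsymT HconnT); auto)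
     ltac:(cbv beta; rewrite Nat.sub_0_r, Nat.add_0_r; auto)
     ltac:(cbv beta; rewrite Nat.sub_diag, T0; replace (M - 1 + (n - (M - 1))) with n by lia; rewrite Hn; auto)
     (D - u) ltac:(lia)) as [be [Hbe Hbed]].
  simpl in Hald, Hbed. replace (D - (D - u)) with u in Hbed by lia.
  assert (E1 : dist adjT (tau 0) (tau u) = u - 0) by (apply (geo_dist adjT HconnT tau D); auto; lia).
  assert (E2 : dist adjT (tau u) (tau D) = D - u) by (apply (geo_dist adjT HconnT tau D); auto; lia).
  rewrite T0 in E1. rewrite TD in E2.
  assert (A1 : dist adjT a (f (c al)) <= L * al + C).
  { pose proof (HQ1 (c 0) (c al)). pose proof (dist_path adj Hconn c n 0 al Hp ltac:(lia) ltac:(lia)).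
    assert (L * dist adj (c 0) (c al) <= L * al) by (apply Nat.mul_le_mono_l; lia). unfold a; lia. }
  pose proof (dist_tri adjT HconnT a (f (c al)) (tau u)).
  assert (HaB : B <= al).
  { apply mul_le_cancel. unfold Q in HuQ. lia. }
  assert (A2 : dist adjT (f (c al)) b <= L * (M - 1 - al) + C).
  { pose proof (HQ1 (c al) (c (M - 1))). pose proof (dist_path adj Hconn c n al (M - 1) Hp ltac:(lia) ltac:(lia)).
    assert (L * dist adj (c al) (c (M - 1)) <= L * (M - 1 - al)) by (apply Nat.mul_le_mono_l; lia). unfold b; lia. }
  pose proof (dist_tri adjT HconnT (tau u) (f (c al)) b).
  rewrite (dist_sym adjT HsymT HconnT (tau u) (f (c al))) in H0.
  assert (HaB2 : B <= M - 1 - al).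
  { apply mul_le_cancel. unfold Q in HuQ. lia. }
  set (be' := M - 1 + be).
  assert (Dab : dist adjT (f (c al)) (f (c be')) <= 2 * J).
  { pose proof (dist_tri adjT HconnT (f (c al)) (tau u) (f (c be'))).
    rewrite (dist_sym adjT HsymT HconnT (tau u) (f (c be'))) in H1. unfold be' in *. lia. }
  assert (Hrho : dist adj (c al) (c be') <= m0).
  { pose proof (HQ2 (c al) (c be')).
    assert (L * dist adjT (f (c al)) (f (c be')) <= L * (2 * J)) by (apply Nat.mul_le_mono_l; auto).
    unfold m0; lia. }
  exists al, be'. unfold be'. unfold be' in Hrho. unfold B in *. repeat split; lia.
Qed.

End QIChord.


Section Build.
Context {V : Type}.
Variable adj : V -> V -> Prop.
Hypothesis Hsym : forall x y, adj x y -> adj y x.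
Hypothesis Hconn : connected adj.
Variable o : V.
Variable K : nat.

Definition comp n x y := wIn adj (fun v => n <= dist adj o v) x y.

Hypothesis HK : forall n x y, dist adj o x = n -> dist adj o y = n -> comp n x y -> dist adj x y <= K.

Lemma comp_sym n x y : comp n x y -> comp n y x.
Proof. unfold comp. apply wIn_sym; auto. Qed.
Lemma comp_trans n x y z : comp n x y -> comp n y z -> comp n x z.
Proof. unfold comp. apply wIn_trans. Qed.
Lemma comp_refl n x : n <= dist adj o x -> comp n x x.
Proof. intro H. unfold comp. apply (wIn_refl adj (fun v => n <= dist adj o v)). exact H. Qed.
Lemma comp_mono n x y : comp (S n) x y -> comp n x y.
Proof. unfold comp. apply wIn_mono. intros; simpl in *; lia. Qed.
Lemma comp_adj n x y : adj x y -> n <= dist adj o x -> n <= dist adj o y -> comp n x y.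
Proof.
  intros A Hx Hy. exists (fun t => match t with 0 => x | _ => y end), 1. repeat split; auto.
  intros t Ht. replace t with 0 by lia. auto.
  intros [|t] Ht; auto.
Qed.
Lemma comp_ext n x y : comp n x y -> comp n x = comp n y.
Proof.
  intro H. apply functional_extensionality. intro z. apply propositional_extensionality.
  split; intro H'. eapply comp_trans; [apply comp_sym|]; eauto. eapply comp_trans; eauto.
Qed.

Definition Tv := { p : nat * (V -> Prop) | exists x, dist adj o x = fst p /\ snd p = comp (fst p) x }.

Definition adjT (a b : Tv) : Prop :=
  (fst (proj1_sig b) = S (fst (proj1_sig a)) /\ forall y, snd (proj1_sig b) y -> snd (proj1_sig a) y) \/
  (fst (proj1_sig a) = S (fst (proj1_sig b)) /\ forall y, snd (proj1_sig a) y -> snd (proj1_sig b) y).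

Definition fT (x : V) : Tv :=
  exist _ (dist adj o x, comp (dist adj o x) x) (ex_intro _ x (conj eq_refl eq_refl)).

Lemma Tv_eq (a b : Tv) : proj1_sig a = proj1_sig b -> a = b.
Proof. destruct a, b; simpl; intro; subst; f_equal; apply proof_irrelevance. Qed.

Lemma Tv_rep (a : Tv) : exists x, a = fT x.
Proof.
  destruct a as [[n Cp] [x [Hx HC]]]. simpl in *. subst. exists x. apply Tv_eq. simpl. auto.
Qed.

Lemma fT_eq x y : dist adj o x = dist adj o y -> comp (dist adj o x) x y -> fT x = fT y.
Proof.
  intros E H. apply Tv_eq. simpl. rewrite <- E. f_equal. apply comp_ext; auto.
Qed.

Lemma fT_inv x y : fT x = fT y -> dist adj o x = dist adj o y /\ comp (dist adj o x) x y.
Proof.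
  intro E. apply (f_equal (@proj1_sig _ _)) in E. simpl in E. injection E as E1 E2.
  split; auto. rewrite E2. apply comp_refl. lia.
Qed.

Lemma dist_o_adj x y : adj x y -> dist adj o y <= S (dist adj o x).
Proof. intro A. pose proof (dist_tri adj Hconn o x y). pose proof (dist_adj adj Hconn x y A). lia. Qed.

Lemma fT_adj_low x y : dist adj o y = S (dist adj o x) -> adj x y -> adjT (fT x) (fT y).
Proof.
  intros E A. left. simpl. split; auto. intros z Hz. rewrite E in Hz. apply comp_mono in Hz.
  eapply comp_trans; [|exact Hz]. apply comp_adj; auto; lia.
Qed.

Lemma adjT_sym a b : adjT a b -> adjT b a.
Proof. unfold adjT; tauto. Qed.

Lemma fT_walk n x y : walk adj n x y -> exists n', n' <= n /\ walk adjT n' (fT x) (fT y).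
Proof.
  induction 1 as [x|n x y z A W IH].
  - exists 0. split; auto. constructor.
  - destruct IH as [n' [Hn' W']].
    pose proof (dist_o_adj x y A). pose proof (dist_o_adj y x (Hsym _ _ A)).
    destruct (lt_eq_lt_dec (dist adj o x) (dist adj o y)) as [[Hl|Hl]|Hl].
    + exists (S n'). split; [lia|]. apply walkS with (fT y); auto. apply fT_adj_low; auto. lia.
    + exists n'. split; [lia|]. replace (fT x) with (fT y); auto. symmetry. apply fT_eq; auto.
      apply comp_adj; auto; lia.
    + exists (S n'). split; [lia|]. apply walkS with (fT y); auto. apply adjT_sym, fT_adj_low; auto. lia.
Qed.

Lemma fT_adj_bound x x' : adjT (fT x) (fT x') -> dist adj x x' <= S K.
Proof.
  intros [[E H]|[E H]]; simpl in E, H.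
  - destruct (dist_pred adj Hconn o x' _ E) as [y [A Hy]].
    assert (C1 : comp (dist adj o x) x x') by (apply H, comp_refl; lia).
    assert (C2 : comp (dist adj o x) x y).
    { eapply comp_trans; eauto. apply comp_adj; auto; lia. }
    pose proof (HK _ x y eq_refl Hy C2).
    pose proof (dist_adj adj Hconn _ _ A).
    pose proof (dist_tri adj Hconn x y x'). lia.
  - destruct (dist_pred adj Hconn o x _ E) as [y [A Hy]].
    assert (C1 : comp (dist adj o x') x' x) by (apply H, comp_refl; lia).
    assert (C2 : comp (dist adj o x') x' y).
    { eapply comp_trans; eauto. apply comp_adj; auto; lia. }
    pose proof (HK _ x' y eq_refl Hy C2).
    pose proof (dist_adj adj Hconn _ _ A).
    pose proof (dist_tri adj Hconn x y x'). pose proof (dist_sym adj Hsym Hconn x' y). pose proof (dist_sym adj Hsym Hconn x y). lia.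
Qed.

Lemma walkT_bound n a b : walk adjT n a b -> forall x y, a = fT x -> b = fT y ->
  dist adj x y <= K + n * S K.
Proof.
  induction 1 as [a|n a a' b A W IH]; intros x y Ha Hb.
  - subst. apply fT_inv in Hb as [E C]. pose proof (HK _ x y eq_refl (eq_sym E) C). lia.
  - destruct (Tv_rep a') as [x' Hx']. subst.
    pose proof (fT_adj_bound x x' A). specialize (IH x' y eq_refl eq_refl).
    pose proof (dist_tri adj Hconn x x' y). simpl. lia.
Qed.

Lemma walk_to_root n x : dist adj o x = n -> walk adjT n (fT x) (fT o).
Proof.
  revert x; induction n; intros x Hx.
  - apply dist_0 in Hx; auto. subst. constructor.
  - destruct (dist_pred adj Hconn o x n Hx) as [y [A Hy]].
    apply walkS with (fT y); auto. apply adjT_sym, fT_adj_low; auto; lia.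
Qed.

Lemma Tv_tree : is_tree adjT.
Proof.
  split; [exact adjT_sym|]. split.
  { intros a [[E _]|[E _]]; lia. }
  split.
  - intros a b. destruct (Tv_rep a) as [x ->]. destruct (Tv_rep b) as [y ->].
    exists (dist adj o x + dist adj o y). apply walk_app with (fT o).
    apply walk_to_root; auto. apply walk_rev. exact adjT_sym. apply walk_to_root; auto.
  - apply level_nocycle with (h := fun a => fst (proj1_sig a)).
    + exact adjT_sym.
    + intros a b [[E _]|[E _]]; auto.
    + intros a b1 b2 A1 A2 L1 L2.
      destruct (Tv_rep a) as [x ->]. destruct (Tv_rep b1) as [y1 ->]. destruct (Tv_rep b2) as [y2 ->].
      simpl in L1, L2.
      destruct A1 as [[E1 H1]|[E1 H1]]; simpl in E1, H1; [lia|].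
      destruct A2 as [[E2 H2]|[E2 H2]]; simpl in E2, H2; [lia|].
      assert (C1 : comp (dist adj o y1) y1 x) by (apply H1, comp_refl; lia).
      assert (C2 : comp (dist adj o y2) y2 x) by (apply H2, comp_refl; lia).
      assert (E : dist adj o y1 = dist adj o y2) by lia.
      apply fT_eq; auto. eapply comp_trans; eauto. rewrite E. apply comp_sym; auto.
Qed.

Theorem build_qi : qi_to_tree adj.
Proof.
  exists Tv, adjT. split. exact Tv_tree.
  exists fT, (S K), K. split.
  - intros x y dx dy Hx Hy. split.
    + destruct Hx as [Wx _]. destruct (fT_walk _ _ _ Wx) as [n' [Hn' W']].
      destruct Hy as [_ Hy]. specialize (Hy _ W'). simpl. nia.
    + apply (gdist_dist adj Hconn) in Hx. subst. destruct Hy as [Wy _].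
      pose proof (walkT_bound _ _ _ Wy x y eq_refl eq_refl). nia.
  - intro w. destruct (Tv_rep w) as [x ->]. exists x, 0. split; [|lia].
    split. constructor. intros; lia.
Qed.

End Build.


Lemma fcat_end {V} (c : nat -> V) n d m : c n = d 0 -> fcat c n d (n + m) = d m.
Proof.
  intro E. unfold fcat. destruct (Nat.leb_spec (n + m) n).
  - replace m with 0 by lia. rewrite Nat.add_0_r; auto.
  - f_equal; lia.
Qed.

Lemma fcat_l {V} (c : nat -> V) n d x : x <= n -> fcat c n d x = c x.
Proof. intro H. unfold fcat. destruct (Nat.leb_spec x n); auto; lia. Qed.

Lemma fcat_r {V} (c : nat -> V) n d x : c n = d 0 -> n <= x -> fcat c n d x = d (x - n).
Proof. intros E H. unfold fcat. destruct (Nat.leb_spec x n); auto.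
  replace x with n by lia. rewrite Nat.sub_diag; auto. Qed.

Section Bottle.
Context {V : Type}.
Variable adj : V -> V -> Prop.
Hypothesis Hsym : forall x y, adj x y -> adj y x.
Hypothesis Hconn : connected adj.
Variables i0 k m : nat.
Hypothesis HCH : forall c n, fpath adj c n -> c n = c 0 ->
  (forall a b, a < b -> b <= n -> c a = c b -> a = 0 /\ b = n) -> 2 < n -> k <= n ->
  exists i j rho, 1 <= i /\ i <= i0 /\ i < j /\ j <= n /\ dist adj (c (i - 1)) (c j) <= rho /\
    rho <= m /\ rho <= j - i /\ rho + 2 + j <= n + i.

Let r := i0 + m + k + 1.

Lemma bottleneck sg N : fpath adj sg N -> dist adj (sg 0) (sg N) = N -> forall D, D <= N ->
  forall om W, fpath adj om W -> om 0 = sg 0 -> om W = sg N ->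
  exists t, t <= W /\ dist adj (om t) (sg D) <= r.
Proof.
  intros Hsg HN D HD om W Hom O0 OW.
  apply NNPP; intro Hn.
  assert (Hav : forall t, t <= W -> r < dist adj (om t) (sg D)).
  { intros t Ht. apply not_le. intro; apply Hn; eauto. }
  set (InW := fun v => exists t, t <= W /\ om t = v).
  assert (GD : forall a b, a <= b -> b <= N -> dist adj (sg a) (sg b) = b - a).
  { intros a b Hab Hb. apply (geo_dist adj Hconn sg N); auto. }
  assert (GI : forall a b, a <= N -> b <= N -> sg a = sg b -> a = b).
  { intros a b Ha Hb E. apply (geo_inj adj Hconn sg N); auto. }
  destruct (maxP_ex (fun u => InW (sg u)) D) as [s [Hs [Ins Hsmax]]].
  { exists 0. split; auto. lia. }
  destruct (min_ex (fun v => D <= v <= N /\ InW (sg v))) as [tt [[Htt Intt] Htmin]].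
  { exists N. split. lia. exists W. split; auto. }
  assert (Hsr : r < D - s).
  { destruct Ins as [x [Hx Ex]]. specialize (Hav x Hx). rewrite Ex, GD in Hav; lia. }
  assert (Htr : r < tt - D).
  { destruct Intt as [x [Hx Ex]]. specialize (Hav x Hx). rewrite Ex in Hav.
    rewrite (dist_sym adj Hsym Hconn), GD in Hav; lia. }
  assert (NotIn : forall v, s < v < tt -> ~ InW (sg v)).
  { intros v Hv Hin. destruct (le_lt_dec v D). apply (Hsmax v); auto; lia.
    assert (tt <= v) by (apply Htmin; split; auto; lia). lia. }
  assert (WW : wIn adj InW (sg tt) (sg s)).
  { destruct Intt as [x1 [Hx1 E1]]. destruct Ins as [x2 [Hx2 E2]]. rewrite <- E1, <- E2.
    apply (wIn_path adj Hsym InW om W); auto. intros t Ht; exists t; auto. }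
  destruct (short_inj adj InW _ _ WW) as [pi [Lp [Hp [Hp0 [HpL [HpIn Hpi]]]]]].
  assert (HLp : tt - s <= Lp).
  { pose proof (dist_le adj Hconn _ _ _ (fpath_walk adj Lp pi Hp)). rewrite Hp0, HpL in H.
    rewrite (dist_sym adj Hsym Hconn), GD in H; lia. }
  set (a := tt - D). set (b := a + Lp).
  set (sg1 := fun x => sg (D + x)). set (sg3 := fun z => sg (s + z)).
  set (c := fcat sg1 a (fcat pi Lp sg3)).
  set (n := b + (D - s)).
  assert (E1 : sg1 a = pi 0) by (unfold sg1, a; rewrite Hp0; f_equal; lia).
  assert (E2 : pi Lp = sg3 0) by (unfold sg3; rewrite HpL; f_equal; lia).
  assert (E12 : sg1 a = fcat pi Lp sg3 0) by (rewrite fcat_l; auto; lia).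
  assert (C1 : forall x, x <= a -> c x = sg (D + x)).
  { intros x Hx. unfold c. rewrite fcat_l; auto. }
  assert (C2 : forall x, a <= x <= b -> c x = pi (x - a)).
  { intros x Hx. unfold c. rewrite fcat_r; auto; try lia. rewrite fcat_l; auto. unfold b in Hx; lia. }
  assert (C3 : forall x, b <= x -> c x = sg (s + (x - b))).
  { intros x Hx. unfold c. rewrite fcat_r; auto; try lia. rewrite fcat_r; auto; try lia.
    unfold sg3. f_equal. unfold b in *; lia. }
  assert (Hc : fpath adj c n).
  { unfold c, n, b. rewrite <- Nat.add_assoc. apply fcat_path; auto.
    - intros x Hx. unfold sg1. replace (D + S x) with (S (D + x)) by lia. apply Hsg. unfold a in Hx; lia.
    - apply fcat_path; auto. intros x Hx. unfold sg3. replace (s + S x) with (S (s + x)) by lia.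
      apply Hsg. lia. }
  assert (Hcn : c n = c 0).
  { rewrite C3 by (unfold n; lia). rewrite C1 by lia. f_equal. unfold n; lia. }
  assert (InPi : forall y, y <= Lp -> InW (pi y)) by auto.
  assert (Hinj : forall a' b', a' < b' -> b' <= n -> c a' = c b' -> a' = 0 /\ b' = n).
  { intros a' b' Hab Hbn E.
    destruct (le_lt_dec a' a) as [Ha1|Ha1]; [|destruct (le_lt_dec b a') as [Ha3|Ha2]].
    - destruct (le_lt_dec b' a) as [Hb1|Hb1]; [|destruct (le_lt_dec b b') as [Hb3|Hb2]].
      + rewrite C1, C1 in E by lia. apply GI in E; unfold a in *; lia.
      + rewrite C1, C3 in E by lia. apply GI in E; unfold n, b, a in *; lia.
      + rewrite C1, C2 in E by lia. exfalso.
        destruct (Nat.eq_dec (D + a') tt) as [Et|Et].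
        * rewrite Et, <- Hp0 in E. apply Hpi in E; unfold b in *; lia.
        * apply (NotIn (D + a')). unfold a in *; lia. rewrite E. apply InPi. unfold b in *; lia.
    - rewrite C3, C3 in E by lia. apply GI in E; unfold n, b in *; lia.
    - destruct (le_lt_dec b b') as [Hb3|Hb2].
      + rewrite C2, C3 in E by lia. exfalso.
        destruct (Nat.eq_dec (s + (b' - b)) s) as [Es|Es].
        * rewrite Es, <- HpL in E. apply Hpi in E; unfold b in *; lia.
        * apply (NotIn (s + (b' - b))). unfold n, b, a in *; lia. rewrite <- E. apply InPi. unfold b in *; lia.
      + rewrite C2, C2 in E by lia. apply Hpi in E; unfold b in *; lia. }
  destruct (HCH c n Hc Hcn Hinj ltac:(unfold n, b, a, r in *; lia) ltac:(unfold n, b, a, r in *; lia))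
    as [i [j [rho [Hi1 [Hi2 [Hij [Hjn [Hd [Hrm [Hr1 Hr2]]]]]]]]]].
  assert (Ci : c (i - 1) = sg (D + (i - 1))) by (apply C1; unfold a, r in *; lia).
  rewrite Ci in Hd.
  destruct (le_lt_dec j a) as [Hj1|Hj1]; [|destruct (le_lt_dec b j) as [Hj3|Hj2]].
  - rewrite C1 in Hd by lia. rewrite GD in Hd by (unfold a in *; lia). lia.
  - rewrite C3 in Hd by lia. rewrite (dist_sym adj Hsym Hconn), GD in Hd by (unfold n, b, a in *; lia).
    unfold n in *. lia.
  - rewrite C2 in Hd by lia.
    assert (Hin : InW (pi (j - a))) by (apply InPi; unfold b in *; lia).
    destruct Hin as [x [Hx Ex]]. specialize (Hav x Hx). rewrite Ex in Hav.
    pose proof (dist_tri adj Hconn (pi (j - a)) (sg (D + (i - 1))) (sg D)).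
    rewrite (dist_sym adj Hsym Hconn (pi (j - a)) (sg (D + (i - 1)))) in H.
    rewrite (dist_sym adj Hsym Hconn (sg (D + (i - 1))) (sg D)), GD in H by (unfold a in *; lia).
    unfold r in *. lia.
Qed.

Lemma comp_bound o n x y : dist adj o x = n -> dist adj o y = n -> comp adj o n x y ->
  dist adj x y <= 6 * r + 1.
Proof.
  intros Hx Hy [om [W [Hom [O0 [OW Hlev]]]]].
  destruct (geo_ex adj Hconn x y) as [sg [Hsg [S0 SN]]]. set (N := dist adj x y) in *.
  assert (HN : dist adj (sg 0) (sg N) = N) by (rewrite S0, SN; reflexivity).
  assert (HD : exists D, N = 2 * D \/ N = 2 * D + 1).
  { destruct (Nat.Even_or_Odd N) as [[u Hu]|[u Hu]]; exists u; lia. }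
  destruct HD as [D HD].
  destruct (bottleneck sg N Hsg HN D ltac:(lia) om W Hom ltac:(congruence) ltac:(congruence))
    as [t [Ht Hq]].
  specialize (Hlev t Ht). simpl in Hlev.
  destruct (geo_ex adj Hconn x o) as [g1 [Hg1 [G10 G1N]]].
  destruct (geo_ex adj Hconn o y) as [g2 [Hg2 [G20 G2N]]].
  rewrite (dist_sym adj Hsym Hconn), Hx in Hg1, G1N. rewrite Hy in Hg2, G2N.
  assert (HE : g1 n = g2 0) by congruence.
  assert (Hd1 : dist adj (g1 0) (g1 n) = n) by (rewrite G10, G1N, (dist_sym adj Hsym Hconn); auto).
  assert (Hd2 : dist adj (g2 0) (g2 n) = n) by (rewrite G20, G2N; auto).
  pose proof (fcat_path adj g1 n g2 n Hg1 Hg2 HE) as Hw.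
  destruct (bottleneck sg N Hsg HN D ltac:(lia) (fcat g1 n g2) (n + n) Hw
     ltac:(rewrite fcat_l by lia; congruence) ltac:(rewrite fcat_end; congruence)) as [t' [Ht' Hu]].
  assert (GD : dist adj x (sg D) = D).
  { pose proof (geo_dist adj Hconn sg N 0 D Hsg HN ltac:(lia) ltac:(lia)) as G. rewrite S0 in G. lia. }
  assert (GD' : dist adj (sg D) y = N - D).
  { pose proof (geo_dist adj Hconn sg N D N Hsg HN ltac:(lia) ltac:(lia)) as G. rewrite SN in G. lia. }
  pose proof (dist_tri adj Hconn o (fcat g1 n g2 t') (sg D)).
  pose proof (dist_tri adj Hconn o (sg D) (om t)).
  rewrite (dist_sym adj Hsym Hconn (sg D) (om t)) in H0.
  destruct (le_lt_dec t' n) as [Hl|Hl].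
  - rewrite fcat_l in * by lia.
    assert (A1 : dist adj (g1 0) (g1 t') = t' - 0) by (apply (geo_dist adj Hconn g1 n); auto; lia).
    assert (A2 : dist adj (g1 t') (g1 n) = n - t') by (apply (geo_dist adj Hconn g1 n); auto; lia).
    rewrite G10 in A1. rewrite G1N in A2. rewrite (dist_sym adj Hsym Hconn) in A2.
    pose proof (dist_tri adj Hconn x (g1 t') (sg D)). unfold r in *. lia.
  - rewrite fcat_r in * by (auto; lia).
    assert (A1 : dist adj (g2 0) (g2 (t' - n)) = t' - n - 0) by (apply (geo_dist adj Hconn g2 n); auto; lia).
    assert (A2 : dist adj (g2 (t' - n)) (g2 n) = n - (t' - n)) by (apply (geo_dist adj Hconn g2 n); auto; lia).
    rewrite G20 in A1. rewrite G2N in A2.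
    pose proof (dist_tri adj Hconn (sg D) (g2 (t' - n)) y).
    rewrite (dist_sym adj Hsym Hconn (sg D) (g2 (t' - n))) in H1. unfold r in *. lia.
Qed.

End Bottle.


Lemma firstn_add_app {A} a b (l : list A) : firstn (a + b) l = firstn a l ++ firstn b (skipn a l).
Proof.
  revert l; induction a; intros l; simpl; auto.
  destruct l; simpl; auto. destruct b; auto. rewrite IHa; auto.
Qed.

Section Cay.
Variable G : Type.
Variable mul : G -> G -> G.
Variable inv : G -> G.
Variable e : G.
Hypothesis Hgrp : is_group mul inv e.
Variable S : list G.
Hypothesis HS : generates mul inv e S.

Let assoc : forall x y z, mul x (mul y z) = mul (mul x y) z := proj1 Hgrp.
Let idl : forall x, mul e x = x := proj1 (proj2 Hgrp).
Let idr : forall x, mul x e = x := proj1 (proj2 (proj2 Hgrp)).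
Let invl : forall x, mul (inv x) x = e := proj1 (proj2 (proj2 (proj2 Hgrp))).
Let invr : forall x, mul x (inv x) = e := proj2 (proj2 (proj2 (proj2 Hgrp))).

Lemma g_solve a b x : b = mul a x -> x = mul (inv a) b.
Proof. intros ->. rewrite assoc, invl, idl. auto. Qed.

Lemma g_solve' a b x : x = mul (inv a) b -> b = mul a x.
Proof. intros ->. rewrite assoc, invr, idl. auto. Qed.

Lemma g_inv_inv x : inv (inv x) = x.
Proof.
  rewrite <- (idr (inv (inv x))), <- (invl x), assoc, invl, idl. auto.
Qed.

Lemma g_inv_e : inv e = e.
Proof. rewrite <- (idr (inv e)). apply invl. Qed.

Lemma g_eq a b : mul (inv a) b = e -> a = b.
Proof. intro H. symmetry in H. apply g_solve' in H. rewrite idr in H. auto. Qed.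

Lemma g_cancel a x y : mul a x = mul a y -> x = y.
Proof. intro H. apply g_solve in H. rewrite assoc, invl, idl in H. auto. Qed.

Definition cay := cay_adj mul inv e S.
Definition Sp := Spm inv e S.

Lemma Sp_inv s : Sp s -> Sp (inv s).
Proof.
  intros [[H|H] Hne]; split.
  - right. rewrite g_inv_inv. auto.
  - intro E. apply Hne. rewrite <- (g_inv_inv s), E.
    apply g_inv_e.
  - left. auto.
  - intro E. apply Hne. rewrite <- (g_inv_inv s), E.
    apply g_inv_e.
Qed.

Lemma cay_sym x y : cay x y -> cay y x.
Proof.
  intros [s [Hs ->]]. exists (inv s). split. apply Sp_inv; auto.
  rewrite <- assoc, invr, idr. auto.
Qed.

Lemma wprod_app l1 l2 : wprod mul e (l1 ++ l2) = mul (wprod mul e l1) (wprod mul e l2).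
Proof. induction l1; simpl. rewrite idl; auto. rewrite IHl1, assoc; auto. Qed.

Lemma walk_word n g h : walk cay n g h -> exists w, Forall Sp w /\ length w = n /\ h = mul g (wprod mul e w).
Proof.
  induction 1 as [x|n x y z A W IH].
  - exists []. simpl. rewrite idr. auto.
  - destruct IH as [w [Hw [Hl ->]]]. destruct A as [s [Hs ->]].
    exists (s :: w). simpl. split; [constructor; auto|]. split; [auto|]. rewrite assoc; auto.
Qed.

Lemma word_walk w : Forall Sp w -> forall g, walk cay (length w) g (mul g (wprod mul e w)).
Proof.
  induction 1 as [|s w Hs Hw IH]; intro g; simpl.
  - rewrite idr. constructor.
  - apply walkS with (mul g s). exists s; auto. rewrite assoc. apply IH.
Qed.

Lemma cay_conn : connected cay.
Proof.
  intros g h. destruct (HS (mul (inv g) h)) as [w [Hw E]]. exists (length w).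
  pose proof (word_walk w Hw g). rewrite E in H. rewrite assoc, invr, idl in H. auto.
Qed.

Definition pref (w : list G) t := wprod mul e (firstn t w).

Lemma pref_S w t : t < length w -> pref w (Datatypes.S t) = mul (pref w t) (nth t w e).
Proof.
  unfold pref. revert t; induction w as [|a w IH]; intros t Ht; simpl in *. lia.
  destruct t; simpl. rewrite idl, idr; auto.
  rewrite IH by lia. rewrite assoc; auto.
Qed.

Lemma pref_0 w : pref w 0 = e.
Proof. reflexivity. Qed.

Lemma pref_len w : pref w (length w) = wprod mul e w.
Proof. unfold pref. rewrite firstn_all. auto. Qed.

Lemma seg_pref w p q : 1 <= p -> p <= q -> wprod mul e (seg w p q) = mul (inv (pref w (p - 1))) (pref w q).
Proof.
  intros H1 H2. apply g_solve. unfold pref, seg. rewrite <- wprod_app, <- firstn_add_app.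
  f_equal. f_equal. lia.
Qed.

Lemma pref_path w : Forall Sp w -> fpath cay (pref w) (length w).
Proof.
  intros Hw t Ht. exists (nth t w e). split.
  - rewrite Forall_forall in Hw. apply Hw. apply nth_In; auto.
  - apply pref_S; auto.
Qed.

Lemma simple_cycle w : simple_relation mul inv e S w ->
  fpath cay (pref w) (length w) /\ pref w (length w) = pref w 0 /\
  (forall a b, a < b -> b <= length w -> pref w a = pref w b -> a = 0 /\ b = length w).
Proof.
  intros [Hn [Hw [He Hs]]]. split; [apply pref_path; auto|]. split.
  rewrite pref_len, He; auto.
  intros a b Hab Hb E. assert (wprod mul e (seg w (Datatypes.S a) b) = e).
  { rewrite seg_pref by lia. replace (Datatypes.S a - 1) with a by lia. rewrite E. auto. }
  apply Hs in H; lia.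
Qed.

Lemma cycle_simple c n : fpath cay c n -> c n = c 0 ->
  (forall a b, a < b -> b <= n -> c a = c b -> a = 0 /\ b = n) -> 2 < n ->
  exists w, simple_relation mul inv e S w /\ length w = n /\
    forall p q, 1 <= p -> p <= q -> q <= n -> wprod mul e (seg w p q) = mul (inv (c (p - 1))) (c q).
Proof.
  intros Hp Hcl Hi Hn.
  set (fl := fun t => mul (inv (c t)) (c (Datatypes.S t))).
  set (w := map fl (seq 0 n)).
  assert (Hlen : length w = n) by (unfold w; rewrite length_map, length_seq; auto).
  assert (Hnth : forall t, t < n -> nth t w e = fl t).
  { intros t Ht. unfold w. rewrite (nth_indep _ e (fl 0)) by (rewrite length_map, length_seq; lia).
    rewrite map_nth, seq_nth by lia. auto. }
  assert (Hfl : forall t, t < n -> Sp (fl t)).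
  { intros t Ht. destruct (Hp t Ht) as [s [Hs E]]. unfold fl. apply g_solve in E.
    rewrite <- E. auto. }
  assert (Hw : Forall Sp w).
  { apply Forall_forall. intros x Hx. unfold w in Hx. apply in_map_iff in Hx as [t [<- Ht]].
    apply in_seq in Ht. apply Hfl; lia. }
  assert (Hpref : forall t, t <= n -> pref w t = mul (inv (c 0)) (c t)).
  { induction t; intros Ht. rewrite pref_0, invl; auto.
    rewrite pref_S by lia. rewrite IHt by lia. rewrite Hnth by lia. unfold fl.
    rewrite <- assoc. f_equal. rewrite assoc, invr, idl. auto. }
  assert (Hseg : forall p q, 1 <= p -> p <= q -> q <= n -> wprod mul e (seg w p q) = mul (inv (c (p - 1))) (c q)).
  { intros p q H1 H2 H3. pose proof (seg_pref w p q H1 H2) as HX. apply g_solve' in HX.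
    rewrite !Hpref in HX by lia. rewrite <- assoc in HX. apply g_cancel in HX. apply g_solve in HX. exact HX. }
  exists w. split; [|split; auto].
  split; [lia|]. split; auto. split.
  - rewrite <- pref_len, Hlen, Hpref, Hcl, invl; auto.
  - intros p q H1 H2 H3. rewrite Hlen in *. rewrite Hseg by lia. split.
    + intro E. apply g_eq in E. apply Hi in E; lia.
    + intros [-> ->]. rewrite Hcl. simpl. apply invl.
Qed.

Lemma chordal_CH i0 k m : chordal mul inv e S i0 k m ->
  forall c n, fpath cay c n -> c n = c 0 ->
  (forall a b, a < b -> b <= n -> c a = c b -> a = 0 /\ b = n) -> 2 < n -> k <= n ->
  exists i j rho, 1 <= i /\ i <= i0 /\ i < j /\ j <= n /\ dist cay (c (i - 1)) (c j) <= rho /\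
    rho <= m /\ rho <= j - i /\ rho + 2 + j <= n + i.
Proof.
  intros Hch c n Hp Hcl Hi Hn Hk.
  destruct (cycle_simple c n Hp Hcl Hi Hn) as [w [Hw [Hlen Hseg]]].
  destruct (Hch w Hw ltac:(lia)) as [i [j [w' [H1 [H2 [H3 [H4 [H5 [H6 [H7 [H8 H9]]]]]]]]]]].
  rewrite Hlen in *. exists i, j, (length w'). repeat split; auto.
  apply (dist_le cay cay_conn). rewrite Hseg in H6 by lia.
  symmetry in H6. apply g_solve' in H6. rewrite H6. apply word_walk; auto.
Qed.

Theorem main_equiv : qi_to_tree cay <-> exists i0 k m : nat, chordal mul inv e S i0 k m.
Proof.
  split.
  - intros [T [adjT [Htree [f [L [C [HQ Hsurj]]]]]]].
    assert (HconnT : connected adjT) by apply Htree.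
    assert (HQ1 : forall x y, dist adjT (f x) (f y) <= Datatypes.S L * dist cay x y + C).
    { intros x y. destruct (HQ x y _ _ (dist_spec cay cay_conn x y) (dist_spec adjT HconnT (f x) (f y))). nia. }
    assert (HQ2 : forall x y, dist cay x y <= Datatypes.S L * dist adjT (f x) (f y) + C).
    { intros x y. destruct (HQ x y _ _ (dist_spec cay cay_conn x y) (dist_spec adjT HconnT (f x) (f y))). nia. }
    destruct (qi_chord cay cay_conn adjT Htree f (Datatypes.S L) C ltac:(lia) HQ1 HQ2) as [M [m0 [HM Hch]]].
    exists M, (2 * M), (M + m0). intros w Hw Hk.
    destruct (simple_cycle w Hw) as [Hp [Hcl _]].
    destruct Hw as [Hn [Hw [He Hs]]].
    set (n := length w) in *.
    assert (Chord : forall i j, 1 <= i -> i <= j -> j <= n ->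
      exists w', Forall Sp w' /\ length w' = dist cay (pref w (i - 1)) (pref w j) /\
        wprod mul e (seg w i j) = wprod mul e w').
    { intros i j Hi Hij Hj. destruct (walk_word _ _ _ (dist_walk cay cay_conn (pref w (i - 1)) (pref w j)))
        as [w' [Hw' [Hl E]]]. exists w'. split; auto. split; auto.
      rewrite seg_pref by lia. apply g_solve in E. auto. }
    destruct (Hch (pref w) n Hp Hcl ltac:(lia)) as [Hlt|[al [be [A1 [A2 [A3 [A4 [A5 A6]]]]]]]].
    + destruct (Chord 1 (M - 1) ltac:(lia) ltac:(lia) ltac:(lia)) as [w' [Hw' [Hl E]]].
      exists 1, (M - 1), w'. simpl in Hl. repeat split; auto; lia.
    + destruct (Chord (Datatypes.S al) be ltac:(lia) ltac:(lia) ltac:(lia)) as [w' [Hw' [Hl E]]].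
      simpl in Hl. rewrite Nat.sub_0_r in Hl.
      exists (Datatypes.S al), be, w'. repeat split; auto; lia.
  - intros [i0 [k [m Hch]]].
    apply (build_qi cay cay_sym cay_conn e (6 * (i0 + m + k + 1) + 1)).
    intros n x y Hx Hy Hc.
    exact (comp_bound cay cay_sym cay_conn i0 k m (chordal_CH i0 k m Hch) e n x y Hx Hy Hc).
Qed.

End Cay.

Theorem corollary2 (G : Type) (mul : G -> G -> G) (inv : G -> G) (e : G)
  (Hgrp : is_group mul inv e) (S : list G) (HS : generates mul inv e S) :
  qi_to_tree (cay_adj mul inv e S) <->
  exists i0 k m : nat, chordal mul inv e S i0 k m.
Proof.
  exact (main_equiv G mul inv e Hgrp S HS).
Qed.
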